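(* Let $X$ be a space equipped with a metric $d: X\times X\to\mathbb{R}$, let $P_X$ be a fixed distribution on $X$, let $P_{Z|X}$ be a Markov kernel from $X$ to a feature space $Z$, and let $\epsilon\ge 0$. The following are equivalent: (1) there exists a Markov kernel $\hat P_{X|Z}$ from $Z$ to $X$ such that $\mathbb{E}_{x\sim P_X}\mathbb{E}_{x'\sim \hat P_{X|Z}\circ P_{Z|x}} d(x,x')\le\epsilon$; (2) for every $\lambda\ge 0$, every label space $Y$, every action space $A$, every joint distribution $P_{XY}$ on $X\times Y$ with $X$-marginal $P_X$, and every loss $L:Y\times A\to\mathbb{R}_+$ whose reconstruction regret satisfies $D_r(x,x')\le\lambda d(x,x')$ for all $x,x'\in X$, one has $\Delta\underline{R}_L(P_{XY},P_{Z|X})\le\epsilon\lambda$.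
   Context: For a distribution $P$ on $Y$, a Bayes act is $a_P\in\arg\inf_a\mathbb{E}_{y\sim P}L(y,a)$ (assumed to exist), $L(y,P):=L(y,a_P)$, and the regret is $D_L(P,Q):=\mathbb{E}_{y\sim P}L(y,Q)-\mathbb{E}_{y\sim P}L(y,P)$. For a joint distribution $P_{WY}$, $\underline{R}_L(P_{WY})=\inf_{f\in A^W}\mathbb{E}_{P_{WY}}L(y,f(w))$, and the Bayes optimal rule is $f_{P_{XY}}(x)=a_{P_{Y|x}}$; standing assumption: all such infima over decision rules (including randomized ones) are attained. The induced feature–label distribution is $P_{ZY}=P_Y\otimes(P_{Z|X}\circ P_{X|Y})$, and the feature gap is $\Delta\underline{R}_L(P_{XY},P_{Z|X}) := \underline{R}_L(P_{ZY})-\underline{R}_L(P_{XY})$. The reconstruction regret of $P_{XY}$ and $L$ is $D_r(x,x') := D_L(P_{Y|x},P_{Y|x'}) = \mathbb{E}_{y\sim P_{Y|x}}L(y,f_{P_{XY}}(x'))-\mathbb{E}_{y\sim P_{Y|x}}L(y,f_{P_{XY}}(x))$. $\hat P_{X|Z}\circ P_{Z|x}$ denotes the law of $x'$ obtained by drawing $z\sim P_{Z|x}$ then $x'\sim\hat P_{X|z}$. *)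

(* Defs.v *)
From HB Require Import structures.
From mathcomp Require Import all_boot all_order all_algebra.
From mathcomp Require Import all_classical all_reals all_analysis.
Set Implicit Arguments. Unset Strict Implicit. Unset Printing Implicit Defensive.
Import Order.TTheory GRing.Theory Num.Theory.
Local Open Scope classical_set_scope.
Local Open Scope ring_scope.
Local Open Scope ereal_scope.

Section Defs.
Context {R : realType}.

Definition is_metric {T : Type} (d : T -> T -> R) : Prop :=
  [/\ (forall x y, d x y = 0%R <-> x = y),
      (forall x y, d x y = d y x) &
      (forall x y z, (d x z <= d x y + d y z)%R)].

Context {dX dY dZ dA : measure_display}
  {X : measurableType dX} {Y : measurableType dY}
  {Z : measurableType dZ} {A : measurableType dA}.

Definition recon_err (PX : probability X R) (PZX : R.-pker X ~> Z)
  (Qh : R.-pker Z ~> X) (d : X -> X -> R) : \bar R :=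
  \int[PX]_x \int[PZX x]_z \int[Qh z]_x' (d x x')%:E.

(** The joint P_XY is P_X (x) P_{Y|X}.  Risk of a (randomized) decision rule
    g : X ~> A on P_XY. *)
Definition riskX (PX : probability X R) (PYX : R.-pker X ~> Y)
  (L : Y -> A -> R) (g : R.-pker X ~> A) : \bar R :=
  \int[PX]_x \int[PYX x]_y \int[g x]_a (L y a)%:E.

(** Risk of a (randomized) decision rule g : Z ~> A on the induced
    feature-label distribution P_ZY (x ~ P_X, y ~ P_{Y|x}, z ~ P_{Z|x}). *)
Definition riskZ (PX : probability X R) (PYX : R.-pker X ~> Y)
  (PZX : R.-pker X ~> Z) (L : Y -> A -> R) (g : R.-pker Z ~> A) : \bar R :=
  \int[PX]_x \int[PYX x]_y \int[PZX x]_z \int[g z]_a (L y a)%:E.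

Definition bayes_riskX PX PYX L : \bar R :=
  ereal_inf [set riskX PX PYX L g | g in [set: R.-pker X ~> A]].

Definition bayes_riskZ PX PYX PZX L : \bar R :=
  ereal_inf [set riskZ PX PYX PZX L g | g in [set: R.-pker Z ~> A]].

Definition feature_gap PX PYX PZX L : \bar R :=
  bayes_riskZ PX PYX PZX L - bayes_riskX PX PYX L.

Definition bayes_rule (PYX : R.-pker X ~> Y) (L : Y -> A -> R) (f : X -> A) :=
  forall x (a : A),
    \int[PYX x]_y (L y (f x))%:E <= \int[PYX x]_y (L y a)%:E.

Definition recon_regret (PYX : R.-pker X ~> Y) (L : Y -> A -> R)
  (f : X -> A) (x x' : X) : \bar R :=
  \int[PYX x]_y (L y (f x'))%:E - \int[PYX x]_y (L y (f x))%:E.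

End Defs.

(* Main.v *)
Require Import Defs.
From HB Require Import structures.
From mathcomp Require Import all_boot all_order all_algebra.
From mathcomp Require Import all_classical all_reals all_analysis.
From mathcomp Require Import measurable_realfun.
Import Order.TTheory GRing.Theory Num.Theory.
Local Open Scope classical_set_scope.
Local Open Scope ring_scope.
Local Open Scope ereal_scope.

Lemma le_int d (T : measurableType d) (R : realType) (mu : set T -> \bar R)
  (f g : T -> \bar R) : (forall x, f x <= g x) ->
  \int[mu]_x f x <= \int[mu]_x g x.
Proof.
move=> fg; rewrite /integral !patch_setT; apply: leeB.
- apply: le_ereal_sup => _ [h /= hf <-]; exists h => //= x.
  apply: (le_trans (hf x)); exact: (@funepos_le _ _ setT f g) (fun x _ => fg x) x (in_setT x).
- apply: le_ereal_sup => _ [h /= hf <-]; exists h => //= x.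
  apply: (le_trans (hf x)); exact: (@funeneg_le _ _ setT f g) (fun x _ => fg x) x (in_setT x).
Qed.

Section fub.
Context d1 d2 (T1 : measurableType d1) (T2 : measurableType d2) (R : realType).
Variables (m1 : {measure set T1 -> \bar R}) (m2 : {measure set T2 -> \bar R}).
Hypotheses (h1 : m1 setT = 1) (h2 : m2 setT = 1).

Definition mc1 : set T1 -> \bar R := m1.
Definition mc2 : set T2 -> \bar R := m2.
HB.instance Definition _ := isMeasure.Build _ _ _ mc1
  (measure0 m1) (@measure_ge0 _ _ _ m1) (@measure_semi_sigma_additive _ _ _ m1).
HB.instance Definition _ := isMeasure.Build _ _ _ mc2
  (measure0 m2) (@measure_ge0 _ _ _ m2) (@measure_semi_sigma_additive _ _ _ m2).
Let s1 : sigma_finite setT mc1.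
Proof.
apply: fin_num_fun_sigma_finite; first by rewrite measure0.
by apply: lty_fin_num_fun; rewrite /mc1 h1 ltry.
Qed.
Let s2 : sigma_finite setT mc2.
Proof.
apply: fin_num_fun_sigma_finite; first by rewrite measure0.
by apply: lty_fin_num_fun; rewrite /mc2 h2 ltry.
Qed.
HB.instance Definition _ := Measure_isSigmaFinite.Build _ _ _ mc1 s1.
HB.instance Definition _ := Measure_isSigmaFinite.Build _ _ _ mc2 s2.

Lemma fub (f : T1 * T2 -> \bar R) : measurable_fun [set: T1 * T2] f -> (forall z, 0 <= f z) ->
  \int[m1]_x \int[m2]_y f (x, y) = \int[m2]_y \int[m1]_x f (x, y).
Proof. move=> mf f0; exact: (fubini_tonelli (m1:=[the {sigma_finite_measure set T1 -> \bar R} of mc1]) (m2:=[the {sigma_finite_measure set T2 -> \bar R} of mc2]) f mf f0). Qed.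
End fub.

Section ksnd.
Context d dt dz (X : measurableType d) (T : measurableType dt) (Z : measurableType dz) (R : realType).
Variable Q : R.-pker Z ~> X.
Definition ksnd : T * Z -> {measure set X -> \bar R} := fun p => Q p.2.
Let mk U : measurable U -> measurable_fun setT (ksnd ^~ U).
Proof. by move=> mU; apply: measurableT_comp (measurable_kernel Q U mU) measurable_snd. Qed.
HB.instance Definition _ := isKernel.Build _ _ _ _ R ksnd mk.
Let pk p : ksnd p setT = 1. Proof. exact: prob_kernel. Qed.
HB.instance Definition _ := Kernel_isProbability.Build _ _ _ _ _ ksnd pk.
End ksnd.

Lemma meas_ksnd d dt dz (X : measurableType d) (T : measurableType dt) (Z : measurableType dz) (R : realType)
  (Q : R.-pker Z ~> X) (F : T * X -> \bar R) :
  measurable_fun setT F -> (forall p, 0 <= F p) ->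
  measurable_fun setT (fun p : T * Z => \int[Q p.2]_x F (p.1, x)).
Proof.
move=> mF F0.
have := @measurable_fun_integral_finite_kernel _ _ _ _ R (fun q : (T * Z) * X => F (q.1.1, q.2)) (@ksnd _ _ _ X T Z R Q).
apply => //.
apply: measurableT_comp mF _.
apply: measurable_fun_pair.
  exact: measurableT_comp measurable_fst measurable_fst.
exact: measurable_snd.
Qed.

Section kcst.
Context d dt (X : measurableType d) (T : measurableType dt) (R : realType).
Variable mu : {measure set X -> \bar R}.
Hypothesis h : mu setT = 1.
Definition kcst (h' : mu setT = 1) : T -> {measure set X -> \bar R} := fun _ => mu.
Let mk U : measurable U -> measurable_fun setT (kcst h ^~ U).
Proof. by move=> mU; exact: measurable_cst. Qed.
HB.instance Definition _ := isKernel.Build _ _ _ _ R (kcst h) mk.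
Let pk p : kcst h p setT = 1. Proof. exact: h. Qed.
HB.instance Definition _ := Kernel_isProbability.Build _ _ _ _ _ (kcst h) pk.
End kcst.

Lemma meas_kcst d dt (X : measurableType d) (T : measurableType dt) (R : realType)
  (mu : {measure set X -> \bar R}) (h : mu setT = 1) (F : T * X -> \bar R) :
  measurable_fun setT F -> (forall p, 0 <= F p) ->
  measurable_fun setT (fun t : T => \int[mu]_x F (t, x)).
Proof.
move=> mF F0.
have H := (@measurable_fun_integral_finite_kernel _ _ _ _ R F (@kcst _ _ X T R mu h) F0 mF). exact H.
Qed.

Section kpush.
Context d da dz (X : measurableType d) (A : measurableType da) (Z : measurableType dz) (R : realType).
Variables (Q : R.-pker Z ~> X) (f : X -> A) (mf : measurable_fun setT f).
Definition pmeas (mf' : measurable_fun setT f) (z : Z) : set A -> \bar R := fun B => Q z (f @^-1` B).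
Let pm0 z : pmeas mf z set0 = 0.
Proof. by rewrite /pmeas preimage_set0 measure0. Qed.
Let pm_ge0 z B : 0 <= pmeas mf z B.
Proof. exact: measure_ge0. Qed.
Let pm_sa z : semi_sigma_additive (pmeas mf z).
Proof.
move=> F mF tF mUF; rewrite /pmeas preimage_bigcup.
apply: measure_semi_sigma_additive.
- by move=> n; rewrite -[X in measurable X]setTI; exact: mf.
- apply/trivIsetP => /= i j _ _ ij; rewrite -preimage_setI.
  by move/trivIsetP : tF => /(_ _ _ _ _ ij) ->//; rewrite preimage_set0.
- by rewrite -preimage_bigcup -[X in measurable X]setTI; exact: mf.
Qed.
HB.instance Definition _ z := isMeasure.Build _ _ _ (pmeas mf z) (pm0 z) (pm_ge0 z) (pm_sa z).
End kpush.
Section kpush2.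
Context d da dz (X : measurableType d) (A : measurableType da) (Z : measurableType dz) (R : realType).
Variables (Q : R.-pker Z ~> X) (f : X -> A) (mf : measurable_fun setT f).
Definition kpush (mf' : measurable_fun setT f) : Z -> {measure set A -> \bar R} := fun z => @pmeas _ _ _ X A Z R Q f mf' z.
Let mk U : measurable U -> measurable_fun setT (kpush mf ^~ U).
Proof.
move=> mU; apply: (measurable_kernel Q (f @^-1` U)).
by rewrite -[X in measurable X]setTI; exact: mf.
Qed.
HB.instance Definition _ := isKernel.Build _ _ _ _ R (kpush mf) mk.
Let pk z : kpush mf z setT = 1. Proof. change (Q z (f @^-1` setT) = 1). rewrite preimage_setT. exact: prob_kernel. Qed.
HB.instance Definition _ := Kernel_isProbability.Build _ _ _ _ _ (kpush mf) pk.

Lemma int_kpush z (F : A -> \bar R) : measurable_fun setT F -> (forall a, 0 <= F a) ->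
  \int[kpush mf z]_a F a = \int[Q z]_x F (f x).
Proof.
move=> mF F0.
have H := @ge0_integral_pushforward _ _ _ _ R f mf (Q z) setT F measurableT mF (fun a _ => F0 a).
rewrite preimage_setT in H; exact H.
Qed.
End kpush2.
Arguments le_int {d T R} mu {f g}.
Arguments fub {d1 d2 T1 T2 R m1 m2} h1 h2 f.
Arguments meas_ksnd {d dt dz X T Z R} Q F.
Arguments meas_kcst {d dt X T R mu} h F.
Arguments kpush {d da dz X A Z R} Q {f} mf'.
Arguments int_kpush {d da dz X A Z R} Q {f} mf z F.

Theorem theorem5 (R : realType) (dX dZ : measure_display)
  (X : measurableType dX) (Z : measurableType dZ)
  (d : X -> X -> R) (PX : probability X R) (PZX : R.-pker X ~> Z)
  (eps : R) :
  is_metric d ->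
  measurable_fun [set: X * X] (fun p : X * X => d p.1 p.2) ->
  (0 <= eps)%R ->
  (exists Q0 : R.-pker Z ~> X,
      forall Q : R.-pker Z ~> X, recon_err PX PZX Q0 d <= recon_err PX PZX Q d) ->
  (exists Qh : R.-pker Z ~> X, recon_err PX PZX Qh d <= eps%:E)
  <->
  (forall (lam : R), (0 <= lam)%R ->
   forall (dY dA : measure_display) (Y : measurableType dY)
          (A : measurableType dA)
          (PYX : R.-pker X ~> Y) (L : Y -> A -> R) (f : X -> A),
     (forall y a, (0 <= L y a)%R) ->
     measurable_fun [set: Y * A] (fun p : Y * A => L p.1 p.2) ->
     measurable_fun [set: X] f ->
     bayes_rule PYX L f ->
     (forall x x', recon_regret PYX L f x x' <= (lam * d x x')%:E) ->
     feature_gap PX PYX PZX L <= (eps * lam)%:E).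
Proof.
move=> [d0 dsym dtri] md eps0 [Q0 hQ0].
have dge0 : forall x y, (0 <= d x y)%R.
  move=> x y; have := dtri x y x; rewrite (dsym y x) (d0 x x).2 // => h.
  by rewrite -(@pmulr_rge0 _ 2%R) // mulr2n mulrDl !mul1r.
have mdE : measurable_fun setT (fun p : X * X => (d p.1 p.2)%:E).
  exact/measurable_EFinP.
split.
- move=> [Qh hQh] lam lam0 dY dA Y A PYX L f L0 mL mf hB hreg.
  have Lm : forall y, measurable_fun setT (fun a => (L y a)%:E).
    move=> y; apply/measurable_EFinP; exact: (measurableT_comp mL (@pair1_measurable _ _ Y A y)).
  have mLf : measurable_fun setT (fun p : X * Y => (L p.2 (f p.1))%:E).
    apply/measurable_EFinP.
    exact: (@measurableT_comp _ _ _ _ _ _ (fun q : Y * A => L q.1 q.2) setT (fun p : X * Y => (p.2, f p.1)) mL (measurable_fun_pair measurable_snd (measurableT_comp mf measurable_fst))).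
  have mLf' : measurable_fun setT (fun p : Y * X => (L p.1 (f p.2))%:E).
    apply/measurable_EFinP.
    exact: (@measurableT_comp _ _ _ _ _ _ (fun q : Y * A => L q.1 q.2) setT (fun p : Y * X => (p.1, f p.2)) mL (measurable_fun_pair measurable_fst (measurableT_comp mf measurable_snd))).
  set c := fun x => \int[PYX x]_y (L y (f x))%:E.
  have c0 : forall x, 0 <= c x by move=> x; apply: integral_ge0 => y _; rewrite lee_fin.
  have mc : measurable_fun setT c.
    have := measurable_fun_integral_finite_kernel _ PYX _ mLf.
    by apply => p; rewrite lee_fin.
  set r := fun x => \int[PZX x]_z \int[Qh z]_x' (d x x')%:E.
  have r0 : forall x, 0 <= r x.
    by move=> x; apply: integral_ge0 => z _; apply: integral_ge0 => y _; rewrite lee_fin.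
  have mr : measurable_fun setT r.
    have := measurable_fun_integral_finite_kernel
      (fun p : X * Z => \int[Qh p.2]_x' (d p.1 x')%:E) PZX.
    apply.
      by move=> z; apply: integral_ge0 => y _; rewrite lee_fin.
    have := meas_ksnd Qh _ mdE; apply => p; rewrite lee_fin; exact: dge0.
  have mLL : measurable_fun setT (fun p : Y * A => (L p.1 p.2)%:E) by exact/measurable_EFinP.
  have LL0 : forall p : Y * A, 0 <= (L p.1 p.2)%:E by move=> p; rewrite lee_fin.
  have bX : \int[PX]_x c x <= bayes_riskX PX PYX L.
    rewrite /bayes_riskX; apply/ereal_infP => _ [g _ <-]; rewrite /riskX.
    apply: le_int => x.
    rewrite (fub (@prob_kernel _ _ _ _ _ PYX x) (@prob_kernel _ _ _ _ _ g x) _ mLL LL0) /=.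
    apply: (le_trans _ (le_int (g x) (fun a => hB x a))).
    by rewrite integral_cst // prob_kernel mule1.
  have Hb : forall x x', \int[PYX x]_y (L y (f x'))%:E <= c x + (lam * d x x')%:E.
    move=> x x'; have := hreg x x'; rewrite /recon_regret -/(c x).
    have := c0 x; case: (c x) => [cr| |] // _ h.
    - by rewrite -lee_subel_addl.
    - by rewrite addye // leey.
  have E1 : forall y z, \int[kpush Qh mf z]_a (L y a)%:E = \int[Qh z]_x' (L y (f x'))%:E.
    move=> y z; apply: int_kpush; first exact: Lm.
    by move=> a; rewrite lee_fin.
  have mH : forall x, measurable_fun setT (fun x' => (d x x')%:E).
    move=> x; apply/measurable_EFinP.
    exact: (measurableT_comp md (@pair1_measurable _ _ X X x)).
  have ms : forall x, measurable_fun setT (fun z => \int[Qh z]_x' (d x x')%:E).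
    move=> x; apply: (measurable_fun_integral_kernel (l := Qh) (measurable_kernel Qh)).
      by move=> x'; rewrite lee_fin.
    exact: mH.
  have Lf0 : forall p : Y * X, 0 <= (L p.1 (f p.2))%:E by move=> p; rewrite lee_fin.
  have mLQ : measurable_fun setT (fun p : Y * Z => \int[Qh p.2]_x' (L p.1 (f x'))%:E).
    exact: (meas_ksnd Qh _ mLf' Lf0).
  have LQ0 : forall p : Y * Z, 0 <= \int[Qh p.2]_x' (L p.1 (f x'))%:E.
    by move=> p; apply: integral_ge0 => y _; rewrite lee_fin.
  have bZ : bayes_riskZ PX PYX PZX L <= \int[PX]_x c x + lam%:E * \int[PX]_x r x.
    have : bayes_riskZ PX PYX PZX L <= riskZ PX PYX PZX L (kpush Qh mf).
      by apply: ereal_inf_lbound; exists (kpush Qh mf).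
    move/le_trans; apply.
    rewrite -(ge0_integralZl PX measurableT mr (k:=lam%:E) (fun x _ => r0 x)); last by rewrite lee_fin.
    rewrite -(ge0_integralD PX measurableT (fun x _ => c0 x) mc); last 2 first.
      - by move=> x _; apply: mule_ge0 => //; rewrite lee_fin.
      - exact: measurable_funeM.
    rewrite /riskZ; apply: le_int => x.
    under eq_integral => y _ do under eq_integral => z _ do rewrite E1.
    rewrite (fub (@prob_kernel _ _ _ _ _ PYX x) (@prob_kernel _ _ _ _ _ PZX x) _ mLQ LQ0) /=.
    under eq_integral => z _ do
      rewrite (fub (@prob_kernel _ _ _ _ _ PYX x) (@prob_kernel _ _ _ _ _ Qh z) _ mLf' Lf0) /=.
    apply: le_trans (le_int _ (fun z => le_int _ (fun x' => Hb x x'))) _.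
    have E2 : forall z, \int[Qh z]_x' (c x + (lam * d x x')%:E) =
        c x + lam%:E * \int[Qh z]_x' (d x x')%:E.
      move=> z; rewrite (ge0_integralD (Qh z) measurableT (f1 := fun _ => c x)
                           (f2 := fun x' => (lam * d x x')%:E)); last 4 first.
      - by move=> *; exact: c0.
      - exact: measurable_cst.
      - by move=> *; rewrite lee_fin mulr_ge0.
      - by apply/measurable_EFinP; apply: measurable_funM => //; apply/measurable_EFinP; exact: mH.
      rewrite integral_cst // prob_kernel mule1.
      under eq_integral do rewrite EFinM.
      by rewrite ge0_integralZl // => *; rewrite lee_fin.
    under eq_integral => z _ do rewrite E2.
    rewrite (ge0_integralD (PZX x) measurableT (f1 := fun _ => c x)
               (f2 := fun z => lam%:E * \int[Qh z]_x' (d x x')%:E)); last 4 first.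
    - by move=> *; exact: c0.
    - exact: measurable_cst.
    - by move=> z _; apply: mule_ge0; rewrite ?lee_fin //; apply: integral_ge0 => *; rewrite lee_fin.
    - exact: measurable_funeM.
    rewrite integral_cst // prob_kernel mule1.
    rewrite ge0_integralZl //; last by move=> z _; apply: integral_ge0 => *; rewrite lee_fin.
  have hQh' : \int[PX]_x r x <= eps%:E := hQh.
  have RE0 : 0 <= \int[PX]_x r x by apply: integral_ge0 => x _; exact: r0.
  have C0 : 0 <= \int[PX]_x c x by apply: integral_ge0 => x _; exact: c0.
  rewrite /feature_gap.
  apply: (le_trans (leeB (lexx _) bX)).
  apply: (le_trans (leeB bZ (lexx _))).
  move: C0; case: (\int[PX]_x c x) => [C| |] // _.
  - rewrite addeC addeK //.
    rewrite EFinM muleC.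
    apply: lee_pmul => //; rewrite lee_fin //.
    rewrite addye /=; first exact: leNye.
    by rewrite gt_eqF // (lt_le_trans (ltNye 0)) // mule_ge0 // lee_fin.
- move=> H.
  have mid : measurable_fun setT (@id X) by exact: measurable_id.
  pose K : R.-pker X ~> X := kdirac mid.
  have intK : forall x (F : X -> \bar R), measurable_fun setT F -> \int[K x]_y F y = F x.
    move=> x F mF; change (\int[\d_ x]_y F y = F x).
    by rewrite integral_dirac // diracT mul1e.
  have mH : forall x, measurable_fun setT (fun x' => (d x x')%:E).
    move=> x; apply/measurable_EFinP.
    exact: (measurableT_comp md (@pair1_measurable _ _ X X x)).
  have mdy : forall a, measurable_fun setT (fun y => (d y a)%:E).
    move=> a; apply/measurable_EFinP.
    exact: (measurableT_comp md (@pair2_measurable _ _ X X a)).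
  have hB : bayes_rule K d id.
    move=> x a; rewrite !intK //= (d0 x x).2 // lee_fin; exact: dge0.
  have hreg : forall x x', recon_regret K d id x x' <= (1 * d x x')%:E.
    move=> x x'; rewrite /recon_regret !intK //= (d0 x x).2 // sube0 mul1r //.
  have := H 1%R ler01 _ _ X X K d id dge0 md mid hB hreg.
  have BX : bayes_riskX PX K d = 0.
    apply/eqP; rewrite eq_le; apply/andP; split.
    + have : bayes_riskX PX K d <= riskX PX K d K.
        by apply: ereal_inf_lbound; exists K.
      move/le_trans; apply.
      rewrite /riskX (eq_integral (cst 0)) ?integral0 // => x _.
      rewrite (eq_integral (fun y => (d y x)%:E)); last first.
        by move=> y _; rewrite intK.
      by rewrite intK // (d0 x x).2.
    + apply/ereal_infP => _ [g _ <-]; rewrite /riskX.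
      apply: integral_ge0 => x _; apply: integral_ge0 => y _; apply: integral_ge0 => a _.
      by rewrite lee_fin.
  rewrite /feature_gap BX sube0 mulr1 => hZ.
  exists Q0; apply: le_trans hZ.
  apply/ereal_infP => _ [Q _ <-]; apply: le_trans (hQ0 Q) _.
  rewrite /recon_err /riskZ; apply: le_int => x.
  rewrite intK //.
  have mF : measurable_fun setT (fun p : X * Z => \int[Q p.2]_a (d p.1 a)%:E).
    by apply: (meas_ksnd Q _ mdE) => p; rewrite lee_fin.
  apply: (meas_kcst (@prob_kernel _ _ _ _ _ PZX x) _ mF).
  by move=> p; apply: integral_ge0 => a _; rewrite lee_fin.
Qed.
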